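(* Let $G$ be a graph, $m\geq 2$, and $\mathcal{H}=(L,H)$ an $m$-fold cover of $G$. Let $e=uv\in E(G)$ and $H'=H-E_H(L(u),L(v))$, so that $\mathcal{H}'=(L,H')$ is an $m$-fold cover of $G-\{e\}$. If there is a natural bijection between the $\mathcal{H}'$-colorings of $G-\{e\}$ and the proper $m$-colorings of $G-\{e\}$, then $$P_{DP}(G,\mathcal{H})\geq P(G-\{e\},m)-\max\left\{P(G-\{e\},m)-P(G,m),\ \frac{P(G,m)}{m-1}\right\}.$$ Moreover, there exists an $m$-fold cover $\mathcal{H}^*=(L,H^* )$ of $G$ with $$P_{DP}(G,\mathcal{H}^* )=P(G-\{e\},m)-\max\left\{P(G-\{e\},m)-P(G,m),\ \frac{P(G,m)}{m-1}\right\}.$$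
   Context: All graphs are finite and simple; $G-\{e\}$ is $G$ with edge $e$ deleted. $P(G,m)$ denotes the chromatic polynomial of $G$. A cover of a graph $G$ is a pair $\mathcal{H}=(L,H)$ where $H$ is a graph and $L:V(G)\to\mathcal{P}(V(H))$ satisfies: (1) the sets $L(u)$, $u\in V(G)$, partition $V(H)$; (2) for every $u$, $H[L(u)]$ is complete; (3) if $E_H(L(u),L(v))\neq\emptyset$ then $u=v$ or $uv\in E(G)$; (4) if $uv\in E(G)$ then $E_H(L(u),L(v))$ is a matching (possibly empty). Here $E_H(S,U)$ is the set of edges of $H$ between $S$ and $U$. The cover is $m$-fold if $|L(u)|=m$ for all $u$. An $\mathcal{H}$-coloring is an independent set of $H$ of size $|V(G)|$; $P_{DP}(G,\mathcal{H})$ is the number of $\mathcal{H}$-colorings. For an $m$-fold cover $\mathcal{H}=(L,H)$ of $G$, we say there is a natural bijection between the $\mathcal{H}$-colorings of $G$ and the proper $m$-colorings of $G$ if the elements of each $L(v)$ can be labeled $L(v)=\{(v,j):j\in[m]\}$ so that whenever $uv\in E(G)$, $(u,j)$ and $(v,j)$ are adjacent in $H$ for every $j\in[m]$. *)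

(* Defs.v *)
From HB Require Import structures.
From mathcomp Require Import all_boot all_order all_algebra.
Set Implicit Arguments. Unset Strict Implicit. Unset Printing Implicit Defensive.
Import Order.TTheory GRing.Theory Num.Theory.

Definition simple_graph (V : finType) (adj : rel V) : Prop :=
  (forall x y, adj x y = adj y x) /\ (forall x, ~~ adj x x).

Definition del_edge (V : finType) (adj : rel V) (u v : V) : rel V :=
  fun x y => adj x y && ~~ (((x == u) && (y == v)) || ((x == v) && (y == u))).

Definition chrom (V : finType) (adj : rel V) (m : nat) : nat :=
  #|[set f : {ffun V -> 'I_m} | [forall x, forall y, adj x y ==> (f x != f y)]]|.

Definition is_cover (V W : finType) (adjG : rel V) (L : V -> {set W}) (H : rel W) : Prop :=
  simple_graph H /\
  (forall w, exists u, w \in L u) /\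
  (forall u u' w, w \in L u -> w \in L u' -> u = u') /\
  (forall u x y, x \in L u -> y \in L u -> x != y -> H x y) /\
  (forall u v x y, x \in L u -> y \in L v -> H x y -> u = v \/ adjG u v) /\
  (forall u v, adjG u v -> forall x y y', x \in L u -> y \in L v -> y' \in L v ->
      H x y -> H x y' -> y = y').

Definition is_mfold_cover (V W : finType) (adjG : rel V) (L : V -> {set W}) (H : rel W)
    (m : nat) : Prop :=
  is_cover adjG L H /\ forall u, #|L u| = m.

(* H-colorings: independent sets of H of size |V(G)|. *)
Definition P_DP (V W : finType) (L : V -> {set W}) (H : rel W) : nat :=
  #|[set I : {set W} | [forall x in I, forall y in I, ~~ H x y] && (#|I| == #|V|)]|.

Definition del_cross (V W : finType) (L : V -> {set W}) (H : rel W) (u v : V) : rel W :=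
  fun x y => H x y && ~~ (((x \in L u) && (y \in L v)) || ((x \in L v) && (y \in L u))).

(* natural bijection between (L,H)-colorings of G and proper m-colorings of G:
   a labeling L(v) = {(v,j) : j in [m]} with (u,j)(v,j) in E(H) for uv in E(G). *)
Definition natural_bijection (V W : finType) (adjG : rel V) (L : V -> {set W}) (H : rel W)
    (m : nat) : Prop :=
  exists lab : V -> 'I_m -> W,
    (forall v, injective (lab v)) /\
    (forall v, L v = [set lab v j | j in 'I_m]) /\
    (forall u v, adjG u v -> forall j, H (lab u j) (lab v j)).

(* Main.v *)
Require Import Defs.
From HB Require Import structures.
From mathcomp Require Import all_boot all_order all_algebra perm.
Set Implicit Arguments. Unset Strict Implicit. Unset Printing Implicit Defensive.
Import Order.TTheory GRing.Theory Num.Theory.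

Lemma PDP_count (V W : finType) (L : V -> {set W}) (H : rel W) m (lab : V -> 'I_m -> W) :
 (forall a, injective (lab a)) -> (forall a, L a = [set lab a j | j in 'I_m]) ->
 (forall w, exists a, w \in L a) -> (forall a b w, w \in L a -> w \in L b -> a = b) ->
 (forall a x y, x \in L a -> y \in L a -> x != y -> H x y) ->
 P_DP L H = #|[set c : {ffun V -> 'I_m} | [forall a, forall b, ~~ H (lab a (c a)) (lab b (c b))]]|.
Proof.
move=> labinj Llab cov disj cliq.
have labL a i : lab a i \in L a by rewrite Llab; apply: imset_f.
pose f (c : {ffun V -> 'I_m}) := [set lab a (c a) | a in [set: V]].
have finj : injective f.
  move=> c c' e; apply/ffunP => a.
  have : lab a (c a) \in f c' by rewrite -e; apply: imset_f; rewrite inE.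
  rewrite /f => /imsetP [b _ eb].
  have ab : a = b by apply: (disj a b (lab a (c a))); rewrite // eb.
  by move: eb; rewrite -ab => /labinj.
have cardf c : #|f c| = #|V|.
  rewrite card_imset ?cardsT // => a b e.
  by apply: (disj a b (lab a (c a))); rewrite // e.
rewrite /P_DP -(card_imset (mem [set c : {ffun V -> 'I_m} | [forall a, forall b, ~~ H (lab a (c a)) (lab b (c b))]]) finj); apply: eq_card => I.
rewrite !inE; apply/idP/imsetP.
- case/andP => /forall_inP indep /eqP cI.
  have ex a : exists i, lab a i \in I.
    pose blk x := odflt a [pick b | x \in L b].
    have blkL x : x \in L (blk x).
      rewrite /blk; case: pickP => [b //|/= none].
      by case: (cov x) => b hb; move: (none b); rewrite hb.
    have : #|[set blk x | x in I]| = #|I|.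
      apply: card_in_imset => x y xI yI e.
      apply/eqP; apply: contraT => nxy.
      move: (indep x xI) => /forall_inP /(_ y yI); rewrite (cliq (blk x)) //.
      by rewrite e.
    rewrite cI => cb.
    have : a \in [set blk x | x in I].
      have -> : [set blk x | x in I] = [set: V].
        by apply/eqP; rewrite eqEcard subsetT cardsT cb leqnn.
      by rewrite inE.
    case/imsetP => x xI ->.
    move: (blkL x); rewrite Llab => /imsetP [i _ ex]; exists i; by rewrite -ex.
  have [g hg] := fin_all_exists ex.
  exists [ffun a => g a].
    rewrite inE; apply/forallP => a; apply/forallP => b; rewrite !ffunE.
    by move: (indep _ (hg a)) => /forall_inP /(_ _ (hg b)).
  apply/eqP; rewrite eq_sym eqEcard cardf cI leqnn andbT.
  apply/subsetP => x /imsetP [a _ ->]; by rewrite ffunE.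
- case=> c; rewrite inE => /forallP hc ->; rewrite cardf eqxx andbT.
  apply/forall_inP => x /imsetP [a _ ->]; apply/forall_inP => y /imsetP [b _ ->].
  by move/forallP: (hc a) => /(_ b).
Qed.

Definition pcol (V : finType) (adj : rel V) m (c : {ffun V -> 'I_m}) :=
  [forall x, forall y, adj x y ==> (c x != c y)].

Definition Nc (V : finType) (adj : rel V) m (u v : V) (i j : 'I_m) :=
  #|[set c : {ffun V -> 'I_m} | pcol adj c && (c u == i) && (c v == j)]|.

Lemma sumN (V : finType) (adj : rel V) m (u v : V) (r : 'I_m -> 'I_m -> bool) :
  #|[set c : {ffun V -> 'I_m} | pcol adj c && r (c u) (c v)]| =
  \sum_i \sum_j r i j * Nc adj u v i j.
Proof.
have cs (P : pred {ffun V -> 'I_m}) : #|[set c | P c]| = \sum_c (P c : nat).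
  by rewrite -sum1_card big_mkcond /=; apply: eq_bigr => c _; rewrite inE; case: (P c).
rewrite cs; symmetry.
transitivity (\sum_i \sum_j \sum_c (r i j * (pcol adj c && (c u == i) && (c v == j)))).
  by apply: eq_bigr => i _; apply: eq_bigr => j _; rewrite /Nc cs big_distrr.
transitivity (\sum_i \sum_c \sum_j (r i j * (pcol adj c && (c u == i) && (c v == j)))).
  by apply: eq_bigr => i _; rewrite exchange_big.
rewrite exchange_big /=; apply: eq_bigr => c _.
rewrite (bigD1 (c u)) //= (bigD1 (c v)) //= !eqxx !andbT.
rewrite big1 ?addn0; last first.
  move=> j /negbTE nj; by rewrite eq_sym nj andbF muln0.
rewrite big1 ?addn0; last first.
  move=> i /negbTE ni; apply: big1 => j _; by rewrite eq_sym ni andbF andFb muln0.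
by case: (pcol adj c); case: (r _ _).
Qed.

Lemma Nc_perm (V : finType) (adj : rel V) m (u v : V) (p : {perm 'I_m}) i j :
  Nc adj u v (p i) (p j) = Nc adj u v i j.
Proof.
have le : forall (q : {perm 'I_m}) i j, Nc adj u v i j <= Nc adj u v (q i) (q j).
  move=> q i0 j0; rewrite /Nc.
  pose g (c : {ffun V -> 'I_m}) := [ffun a => q (c a)].
  have ginj : injective g.
    move=> c c' e; apply/ffunP => a.
    by move/ffunP: e => /(_ a); rewrite !ffunE => /perm_inj.
  rewrite -(card_imset _ ginj); apply: subset_leq_card; apply/subsetP => x.
  case/imsetP => c; rewrite !inE => /andP [/andP [pc cu] cv] ->.
  rewrite !ffunE (eqP cu) (eqP cv) !eqxx !andbT.
  apply/forallP => x0; apply/forallP => y0; apply/implyP => a.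
  rewrite !ffunE (inj_eq perm_inj).
  by move/forallP: pc => /(_ x0) /forallP /(_ y0) /implyP; apply.
apply/eqP; rewrite eqn_leq le andbT.
by have := le (p^-1)%g (p i) (p j); rewrite !permK.
Qed.

Lemma Nc_diag (V : finType) (adj : rel V) k (u v : V) (i : 'I_k.+2) :
  Nc adj u v i i = Nc adj u v (@ord0 k.+1) ord0.
Proof. by rewrite -(Nc_perm adj u v (tperm ord0 i) ord0 ord0) tpermL. Qed.

Definition o1 k : 'I_k.+2 := Ordinal (isT : 1 < k.+2).

Lemma Nc_off (V : finType) (adj : rel V) k (u v : V) (i j : 'I_k.+2) :
  i != j -> Nc adj u v i j = Nc adj u v (@ord0 k.+1) (o1 k).
Proof.
move=> ij.
pose t := tperm ord0 i (o1 k).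
have ti : t != i.
  rewrite /t -{2}(tpermL ord0 i) (inj_eq perm_inj) //.
rewrite -(Nc_perm adj u v (tperm ord0 i * tperm t j)%g ord0 (o1 k)) !permM tpermL.
by rewrite -/t tpermL tpermD // eq_sym.
Qed.

Local Open Scope ring_scope.

Lemma ratE (k a b : nat) :
  (((k.+2*a + k.+2*(k.+2-1)*b)%:R - Num.max ((k.+2*a + k.+2*(k.+2-1)*b)%:R - (k.+2*(k.+2-1)*b)%:R)
      ((k.+2*(k.+2-1)*b)%:R / (k.+2-1)%:R)) : rat) = (k.+2*a + k.+2*(k.+2-1)*b - k.+2*maxn a b)%:R.
Proof.
pose m := k.+2.
have m1 : (m - 1)%:R != 0 :> rat by rewrite pnatr_eq0 /m subn1.
have e1 : ((m*(m-1)*b)%:R / (m-1)%:R : rat) = (m*b)%:R.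
  by rewrite mulnAC natrM mulfK.
rewrite e1 natrD addrK -natrD.
have hb : (m*b <= m * a + m*(m-1)*b)%N.
  apply: (leq_trans _ (leq_addl _ _)); rewrite -mulnA leq_mul2l; apply/orP; right.
  by rewrite leq_pmull // /m subn1.
case: (leqP a b) => h.
  rewrite max_r ?ler_nat ?leq_mul2l ?h ?orbT //.
  by rewrite natrB.
rewrite max_l ?ler_nat ?leq_mul2l ?(ltnW h) ?orbT //.
by rewrite natrB // leq_addr.
Qed.

Lemma sum_row (k : nat) (N : 'I_k.+2 -> 'I_k.+2 -> nat) a b
  (hii : forall i, N i i = a) (hij : forall i j, i != j -> N i j = b) (i : 'I_k.+2) :
  (\sum_j N i j = a + k.+1 * b)%N /\ (\sum_j (i != j) * N i j = k.+1 * b)%N.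
Proof.
have h : (\sum_(j | j != i) N i j = k.+1 * b)%N.
  rewrite (eq_bigr (fun _ => b)); last by move=> j ji; rewrite hij // eq_sym.
  rewrite sum_nat_const; congr (_ * _)%N.
  by rewrite -[k.+1]/(k.+2).-1 -[in RHS](card_ord k.+2) -(cardC1 i); apply: eq_card.
rewrite (bigD1 i) //= hii h; split=> //.
rewrite (bigD1 i) //= eqxx mul0n add0n -h; apply: eq_bigr => j ji.
by rewrite eq_sym ji mul1n.
Qed.

Local Close Scope ring_scope.

Lemma row_bound k (N : 'I_k.+2 -> 'I_k.+2 -> nat) a b
  (hii : forall i, N i i = a) (hij : forall i j, i != j -> N i j = b)
  (h : rel 'I_k.+2) (hm : forall i j j', h i j -> h i j' -> j = j') :
  \sum_i \sum_j h i j * N i j <= k.+2 * maxn a b.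
Proof.
have row i : \sum_j h i j * N i j <= maxn a b.
  case: (pickP (h i)) => [j0 hj0 | none].
    rewrite (bigD1 j0) //= big1 => [|j nj]; last first.
      by case hij0: (h i j); rewrite ?mul0n // (hm _ _ _ hij0 hj0) eqxx in nj.
    rewrite hj0 mul1n addn0; case: (eqVneq i j0) => [<-|ne].
      by rewrite hii leq_maxl.
    by rewrite hij // leq_maxr.
  by rewrite big1 // => j _; rewrite none.
apply: (@leq_trans (\sum_(i < k.+2) maxn a b)); first exact: leq_sum.
by rewrite big_const_ord iter_addn addn0 mulnC.
Qed.

Lemma split_sum k (N : 'I_k.+2 -> 'I_k.+2 -> nat) (h : rel 'I_k.+2) :
  \sum_i \sum_j (~~ h i j) * N i j = \sum_i \sum_j N i j - \sum_i \sum_j h i j * N i j.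
Proof.
have -> : \sum_i \sum_j N i j = \sum_i \sum_j (~~ h i j) * N i j + \sum_i \sum_j h i j * N i j.
  rewrite -big_split; apply: eq_bigr => i _; rewrite -big_split; apply: eq_bigr => j _.
  by case: (h i j); rewrite /= ?mul0n ?mul1n ?addn0.
by rewrite addnK.
Qed.

Lemma proper_del (V : finType) (adj : rel V) m (u v : V) (c : {ffun V -> 'I_m}) :
  simple_graph adj -> adj u v ->
  pcol adj c = pcol (del_edge adj u v) c && (c u != c v).
Proof.
move=> [hsy hirr] uv; apply/idP/andP.
- move/forallP => pc; split.
    apply/forallP => x; apply/forallP => y; apply/implyP => /andP [xy _].
    by move/forallP: (pc x) => /(_ y) /implyP; apply.
  by move/forallP: (pc u) => /(_ v) /implyP; apply.
- case=> /forallP pc cuv; apply/forallP => x; apply/forallP => y; apply/implyP => xy.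
  case: (boolP ((x == u) && (y == v) || (x == v) && (y == u))).
    by case/orP => /andP [/eqP -> /eqP ->] //; rewrite eq_sym.
  move=> nd; move/forallP: (pc x) => /(_ y) /implyP; apply.
  by rewrite /del_edge xy nd.
Qed.

Lemma chrom_sum (V : finType) (adj : rel V) k (u v : V) :
  chrom (del_edge adj u v) k.+2 = \sum_(i < k.+2) \sum_(j < k.+2) Nc (del_edge adj u v) u v i j.
Proof.
have -> : chrom (del_edge adj u v) k.+2 =
   #|[set c : {ffun V -> 'I_k.+2} | pcol (del_edge adj u v) c && (fun _ _ => true) (c u) (c v)]|.
  by apply: eq_card => c; rewrite !inE andbT.
by rewrite (sumN _ u v (fun _ _ => true)); apply: eq_bigr => i _; apply: eq_bigr => j _; rewrite mul1n.
Qed.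

Lemma chromG_sum (V : finType) (adj : rel V) k (u v : V) :
  simple_graph adj -> adj u v ->
  chrom adj k.+2 = \sum_(i < k.+2) \sum_(j < k.+2) (i != j) * Nc (del_edge adj u v) u v i j.
Proof.
move=> sg uv.
have -> : chrom adj k.+2 =
   #|[set c : {ffun V -> 'I_k.+2} | pcol (del_edge adj u v) c && (fun i j => i != j) (c u) (c v)]|.
  by apply: eq_card => c; rewrite !inE -proper_del.
by rewrite (sumN _ u v (fun i j => i != j)).
Qed.

Lemma chrom_vals (V : finType) (adj : rel V) k (u v : V) :
  simple_graph adj -> adj u v ->
  let a := Nc (del_edge adj u v) u v (@ord0 k.+1) ord0 in
  let b := Nc (del_edge adj u v) u v (@ord0 k.+1) (o1 k) in
  chrom (del_edge adj u v) k.+2 = k.+2 * a + k.+2 * (k.+2 - 1) * b /\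
  chrom adj k.+2 = k.+2 * (k.+2 - 1) * b.
Proof.
move=> sg uv a b.
have hii (i : 'I_k.+2) : Nc (del_edge adj u v) u v i i = a by exact: Nc_diag.
have hij (i j : 'I_k.+2) : i != j -> Nc (del_edge adj u v) u v i j = b by move/Nc_off.
rewrite chrom_sum (chromG_sum k sg uv) subn1 /=; split.
  rewrite (eq_bigr (fun _ => a + k.+1 * b)); last by move=> i _; case: (sum_row hii hij i).
  by rewrite big_const_ord iter_addn addn0 mulnC mulnDr mulnA.
rewrite (eq_bigr (fun _ => k.+1 * b)); last by move=> i _; case: (sum_row hii hij i).
by rewrite big_const_ord iter_addn addn0 mulnC mulnA.
Qed.

Lemma part1 (V W : finType) (adjG : rel V) k (L : V -> {set W}) (H : rel W) (u v : V) :
  simple_graph adjG -> is_mfold_cover adjG L H k.+2 -> adjG u v ->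
  natural_bijection (del_edge adjG u v) L (del_cross L H u v) k.+2 ->
  chrom (del_edge adjG u v) k.+2 - k.+2 * maxn (Nc (del_edge adjG u v) u v (@ord0 k.+1) ord0)
     (Nc (del_edge adjG u v) u v (@ord0 k.+1) (o1 k)) <= P_DP L H.
Proof.
move=> [hsy hirr] [[[Hsym Hirr] [cov [disj [cliq [edg mat]]]]] cardL] uv [lab [labinj [Llab labE]]].
set a := Nc _ u v ord0 ord0. set b := Nc _ u v ord0 (o1 k).
have labL x i : lab x i \in L x by rewrite Llab; apply: imset_f.
have hii (i : 'I_k.+2) : Nc (del_edge adjG u v) u v i i = a by exact: Nc_diag.
have hij (i j : 'I_k.+2) : i != j -> Nc (del_edge adjG u v) u v i j = b by move/Nc_off.
rewrite (PDP_count labinj Llab cov disj cliq).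
have -> : #|[set c : {ffun V -> 'I_k.+2} | [forall a0, forall b0, ~~ H (lab a0 (c a0)) (lab b0 (c b0))]]|
   = #|[set c : {ffun V -> 'I_k.+2} | pcol (del_edge adjG u v) c &&
          (fun i j => ~~ H (lab u i) (lab v j)) (c u) (c v)]|.
  apply: eq_card => c; rewrite !inE; apply/idP/andP.
  - move=> /forallP hc; split; last by move/forallP: (hc u) => /(_ v).
    apply/forallP => x; apply/forallP => y; apply/implyP => dxy; apply/negP => /eqP cxy.
    move/forallP: (hc x) => /(_ y); rewrite cxy.
    by move: (labE x y dxy (c y)) => /andP [-> _].
  - case=> /forallP pc hcuv; apply/forallP => a0; apply/forallP => b0; apply/negP => Hab.
    case: (edg a0 b0 _ _ (labL a0 (c a0)) (labL b0 (c b0)) Hab) => [e|adj0].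
      by subst b0; move: (Hirr (lab a0 (c a0))); rewrite Hab.
    case: (boolP ((a0 == u) && (b0 == v) || (a0 == v) && (b0 == u))).
      case/orP => /andP [/eqP e1 /eqP e2]; subst a0 b0; move: hcuv; first by rewrite Hab.
      by rewrite Hsym Hab.
    move=> nd.
    have dab : del_edge adjG u v a0 b0 by rewrite /del_edge adj0 nd.
    have e := mat a0 b0 adj0 _ _ _ (labL a0 (c a0)) (labL b0 (c b0)) (labL b0 (c a0)) Hab
                 (proj1 (andP (labE a0 b0 dab (c a0)))).
    move/labinj: e => e.
    by move/forallP: (pc a0) => /(_ b0); rewrite dab e eqxx.
rewrite (sumN _ u v (fun i j => ~~ H (lab u i) (lab v j))) split_sum chrom_sum leq_sub2l //.
apply: row_bound => // i j j' h1 h2.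
by apply: labinj; apply: (mat u v uv (lab u i)) => //.
Qed.

Definition blk (V W : finType) (L : V -> {set W}) (d : V) (w : W) : V :=
  odflt d [pick a | w \in L a].

Definition HsR (V : finType) (Gd : rel V) (u v : V) (sn : nat -> nat) (a0 b0 : V) (i j : nat) : bool :=
  [|| a0 == b0, Gd a0 b0 && (i == j), (a0 == u) && (b0 == v) && (j == sn i)
    | (a0 == v) && (b0 == u) && (i == sn j)].

Lemma del_edge_sym (V : finType) (adj : rel V) u v :
  (forall x y, adj x y = adj y x) -> forall x y, del_edge adj u v x y = del_edge adj u v y x.
Proof.
move=> hsy x y; rewrite /del_edge hsy.
by case: (x == u); case: (x == v); case: (y == u); case: (y == v).
Qed.

Lemma HsR_sym (V : finType) (Gd : rel V) u v sn :
  (forall x y, Gd x y = Gd y x) ->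
  forall a0 b0 i j, HsR Gd u v sn a0 b0 i j = HsR Gd u v sn b0 a0 j i.
Proof.
move=> gs a0 b0 i j; rewrite /HsR (eq_sym a0) gs (eq_sym i).
by case: (b0 == a0); case: (Gd b0 a0); case: (j == i); case: (a0 == u); case: (a0 == v);
   case: (b0 == u); case: (b0 == v); case: (j == sn i); case: (i == sn j).
Qed.

Lemma sn_facts k (p : bool) : let sn := fun i => if p then i else i.+1 %% k.+2 in
  (forall i, i < k.+2 -> sn i < k.+2) /\
  (forall i j, i < k.+2 -> j < k.+2 -> sn i = sn j -> i = j) /\
  (forall i, i < k.+2 -> ~~ p -> sn i != i).
Proof.
rewrite /=; case: p; split => //; try split => //.
- by move=> i; rewrite ltn_mod.
- move=> i j hi hj.
  case: (ltnP i.+1 k.+2) => hi'; case: (ltnP j.+1 k.+2) => hj';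
    rewrite ?(modn_small hi') ?(modn_small hj').
  + by case.
  + have -> : j.+1 = k.+2 by apply/eqP; rewrite eqn_leq hj' andbT.
    by rewrite modnn.
  + have -> : i.+1 = k.+2 by apply/eqP; rewrite eqn_leq hi' andbT.
    by rewrite modnn.
  + move=> _; apply/eqP; rewrite eqn_leq -ltnS -(ltnS j).
    by rewrite (leq_trans hj) // (leq_trans hi).
- move=> i hi _; case: (ltnP i.+1 k.+2) => hi'.
    by rewrite (modn_small hi') neq_ltn ltnSn orbT.
  have -> : i.+1 = k.+2 by apply/eqP; rewrite eqn_leq hi' andbT.
  by rewrite modnn neq_ltn; case: i hi hi'.
Qed.

Lemma part2 (V W : finType) (adjG : rel V) k (L : V -> {set W}) (H : rel W) (u v : V) :
  simple_graph adjG -> is_mfold_cover adjG L H k.+2 -> adjG u v ->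
  exists Hs : rel W, is_mfold_cover adjG L Hs k.+2 /\
   P_DP L Hs = chrom (del_edge adjG u v) k.+2 - k.+2 * maxn (Nc (del_edge adjG u v) u v (@ord0 k.+1) ord0)
     (Nc (del_edge adjG u v) u v (@ord0 k.+1) (o1 k)).
Proof.
move=> [hsy hirr] [[[Hsym Hirr] [cov [disj [cliq [edg mat]]]]] cardL] uv.
set a := Nc _ u v ord0 ord0. set b := Nc _ u v ord0 (o1 k).
have [w0 _] : exists w, w \in L u by apply/card_gt0P; rewrite cardL.
pose lab a0 (i : 'I_k.+2) := nth w0 (enum (L a0)) i.
pose bk := blk L u.
pose id w := index w (enum (L (bk w))).
pose sn := fun i => if b <= a then i else i.+1 %% k.+2.
have [sn_lt [sn_inj sn_ne]] := sn_facts k (b <= a).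
pose Gd := del_edge adjG u v.
have Gsym : forall x y, Gd x y = Gd y x by apply: del_edge_sym.
pose Hs x y := (x != y) && HsR Gd u v sn (bk x) (bk y) (id x) (id y).
have bkL w : w \in L (bk w).
  rewrite /bk /blk; case: pickP => [b0 //|/= none].
  by case: (cov w) => b0 hb; move: (none b0); rewrite hb.
have bk_eq a0 w : w \in L a0 -> bk w = a0 by move=> h; apply: (disj _ _ w).
have sz a0 : size (enum (L a0)) = k.+2 by rewrite -cardE cardL.
have labL a0 i : lab a0 i \in L a0 by rewrite -mem_enum mem_nth // sz.
have bk_lab a0 i : bk (lab a0 i) = a0 by apply: bk_eq.
have id_lab a0 i : id (lab a0 i) = i by rewrite /id bk_lab index_uniq ?enum_uniq ?sz.
have labinj a0 : injective (lab a0).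
  by move=> i j e; apply: ord_inj; rewrite -(id_lab a0 i) -(id_lab a0 j) e.
have id_in w : id w < k.+2 by rewrite -(sz (bk w)) index_mem mem_enum bkL.
have nth_id w : nth w0 (enum (L (bk w))) (id w) = w by rewrite nth_index // mem_enum.
have Llab a0 : L a0 = [set lab a0 j | j in 'I_k.+2].
  apply/setP => x; apply/idP/imsetP => [xL | [j _ ->]]; last exact: labL.
  exists (Ordinal (id_in x)) => //; by rewrite /lab /= -(bk_eq _ _ xL) nth_id.
have uv' : u != v by apply: contraNneq (hirr u) => e; rewrite {2}e.
have cliqHs a0 x y : x \in L a0 -> y \in L a0 -> x != y -> Hs x y.
  by move=> xL yL nxy; rewrite /Hs nxy (bk_eq _ _ xL) (bk_eq _ _ yL) /HsR eqxx.
exists Hs; split.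
  split; last exact: cardL.
  split; first split.
  - by move=> x y; rewrite /Hs eq_sym HsR_sym.
  - by move=> x; rewrite /Hs eqxx.
  split; first exact: cov.
  split; first exact: disj.
  split; first exact: cliqHs.
  split.
  - move=> a0 b0 x y xL yL; rewrite /Hs (bk_eq _ _ xL) (bk_eq _ _ yL) /HsR.
    case/andP => _ /or4P [/eqP -> | /andP [/andP [] //] | | ]; [by left | by right | |].
      by case/andP => /andP [/eqP -> /eqP ->] _; right.
    by case/andP => /andP [/eqP -> /eqP ->] _; right; rewrite hsy.
  - move=> a0 b0 adj0 x y y' xL yL yL'.
    rewrite /Hs (bk_eq _ _ xL) (bk_eq _ _ yL) (bk_eq _ _ yL').
    have nab : a0 != b0 by apply: contraNneq (hirr a0) => e; rewrite {2}e.
    rewrite /HsR (negbTE nab) /= => /andP [_ h1] /andP [_ h2].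
    suff e : id y = id y'.
      by rewrite -(nth_id y) -(nth_id y') (bk_eq _ _ yL) (bk_eq _ _ yL') e.
    case: (boolP (Gd a0 b0)) => gd.
      have nc : ~~ ((a0 == u) && (b0 == v) || (a0 == v) && (b0 == u)) by case/andP: gd.
      have [nA nB] : ~~ ((a0 == u) && (b0 == v)) /\ ~~ ((a0 == v) && (b0 == u)).
        by move: nc; rewrite negb_or => /andP.
      move: h1 h2; rewrite gd (negbTE nA) (negbTE nB) /= !orbF => /eqP <- /eqP.
      done.
    have hc : (a0 == u) && (b0 == v) || (a0 == v) && (b0 == u).
      by move: gd; rewrite /Gd /del_edge adj0 /= negbK.
    have vu : v != u by rewrite eq_sym.
    case/orP: hc => /andP [/eqP ea /eqP eb]; subst a0 b0.
      move: h1 h2; rewrite (negbTE gd) !eqxx (negbTE uv') /= !orbF => /eqP -> /eqP ->.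
      done.
    move: h1 h2; rewrite (negbTE gd) !eqxx (negbTE vu) /= => /eqP h1 /eqP h2.
    have e : sn (id y) = sn (id y') by rewrite -h1 -h2.
    exact: sn_inj (id_in y) (id_in y') e.
rewrite (PDP_count labinj Llab cov disj cliqHs).
have -> : #|[set c : {ffun V -> 'I_k.+2} | [forall a0, forall b0, ~~ Hs (lab a0 (c a0)) (lab b0 (c b0))]]|
  = #|[set c : {ffun V -> 'I_k.+2} | pcol Gd c && (fun i j : 'I_k.+2 => ~~ ((j : nat) == sn i)) (c u) (c v)]|.
  apply: eq_card => c; rewrite !inE.
  have HsE a0 b0 i j : Hs (lab a0 i) (lab b0 j) = (lab a0 i != lab b0 j) && HsR Gd u v sn a0 b0 i j.
    by rewrite /Hs !bk_lab !id_lab.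
  have labne a0 b0 i j : a0 != b0 -> lab a0 i != lab b0 j.
    move=> nab; apply: contra nab => /eqP e; by rewrite -(bk_lab a0 i) e bk_lab.
  apply/idP/andP.
  - move=> /forallP hc; split.
      apply/forallP => x; apply/forallP => y; apply/implyP => dxy; apply/negP => /eqP cxy.
      have nxy : x != y by apply: contraTneq dxy => ->; rewrite /Gd /del_edge (negbTE (hirr y)).
      move/forallP: (hc x) => /(_ y); rewrite HsE labne // /HsR dxy cxy eqxx /= orbT.
      by [].
    move/forallP: (hc u) => /(_ v); rewrite HsE labne // /HsR; apply: contra => e.
    by rewrite !eqxx e /= !orbT.
  - case=> /forallP pc hcuv; apply/forallP => a0; apply/forallP => b0.
    case: (eqVneq a0 b0) => [<-|nab]; first by rewrite HsE eqxx.
    rewrite HsE labne //= /HsR (negbTE nab) /=.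
    have pab : Gd a0 b0 -> c a0 != c b0 by move/forallP: (pc a0) => /(_ b0) /implyP.
    apply/negP => /or3P [/andP [g e] | /andP [/andP [/eqP ea /eqP eb] e] | /andP [/andP [/eqP ea /eqP eb] e]].
    + by move: (pab g); rewrite -val_eqE e.
    + by subst; rewrite e in hcuv.
    + by subst; rewrite e in hcuv.
rewrite (sumN _ u v (fun i j : 'I_k.+2 => ~~ ((j : nat) == sn i))).
rewrite (split_sum (fun i j => Nc Gd u v i j) (fun i j : 'I_k.+2 => (j : nat) == sn i)).
rewrite chrom_sum; congr (_ - _).
rewrite (eq_bigr (fun _ => maxn a b)); first by rewrite big_const_ord iter_addn addn0 mulnC.
move=> i _.
have hi := sn_lt i (ltn_ord i).
pose j0 := Ordinal hi.
rewrite (bigD1 j0) //= eqxx mul1n big1 ?addn0; last first.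
  by move=> j nj; rewrite -[sn i]/(val j0) val_eqE (negbTE nj).
case: (boolP (b <= a)) => ba.
  have -> : j0 = i by apply: ord_inj; rewrite /= /sn ba.
  by rewrite Nc_diag (maxn_idPl ba).
have ne : i != j0 by rewrite -val_eqE /= eq_sym; exact: sn_ne.
rewrite -ltnNge in ba.
by rewrite Nc_off // (maxn_idPr (ltnW ba)).
Qed.

Unset Implicit Arguments.
Local Open Scope ring_scope.

Theorem mainTheorem13 (V W : finType) (adjG : rel V) (m : nat) (L : V -> {set W})
    (H : rel W) (u v : V) :
  simple_graph adjG -> (2 <= m)%N -> is_mfold_cover adjG L H m -> adjG u v ->
  (natural_bijection (del_edge adjG u v) L (del_cross L H u v) m ->
     (P_DP L H)%:R >=
       (chrom (del_edge adjG u v) m)%:R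
       - Num.max ((chrom (del_edge adjG u v) m)%:R - (chrom adjG m)%:R)
                 ((chrom adjG m)%:R / (m - 1)%:R) :> rat) /\
  (exists Hs : rel W, is_mfold_cover adjG L Hs m /\
     (P_DP L Hs)%:R =
       (chrom (del_edge adjG u v) m)%:R
       - Num.max ((chrom (del_edge adjG u v) m)%:R - (chrom adjG m)%:R)
                 ((chrom adjG m)%:R / (m - 1)%:R) :> rat).
Proof.
move=> sg; case: m => [|[|k]] // _ cov uv.
have [e1 e2] := chrom_vals k sg uv.
rewrite e1 e2 ratE.
split.
  by move=> nb; rewrite ler_nat -e1; exact: part1.
have [Hs [hc e]] := part2 sg cov uv.
by exists Hs; split => //; rewrite e e1.
Qed.
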